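(* There is an absolute constant $c>0$ such that for all positive integers $f,l$ there exist integers $(M_C)_C$ such that the hypercube Hamiltonian $H=\sum_C\bigl(\sum_{i\in C}S_i-M_C\bigr)^2$ on $N=l^f$ variables has at least $2^N\bigl(\frac{c}{f\sqrt l}\bigr)^{n_C}$ global minima, all of which are $(2^f-1)$-minima.
   Context: Fix positive integers $f,l$ and let $N=l^f$. The variables $S_i\in\{-1,+1\}$ are indexed by vectors $i=(x_1,\dots,x_f)$ with $x_a\in\{1,\dots,l\}$. A column $C$ is specified by an index $b\in\{1,\dots,f\}$ and integers $y_a\in\{1,\dots,l\}$ for all $a\neq b$; a variable $(x_1,\dots,x_f)$ lies in $C$ iff $x_a=y_a$ for all $a\neq b$. The number of columns is $n_C=f\,l^{f-1}$. Given an integer $M_C$ for each column, $H(S)=\sum_C\bigl(\sum_{i\in C}S_i-M_C\bigr)^2$. A global minimum is an assignment minimizing $H$. For an integer $k\geq1$, an assignment $A$ is a $k$-minimum of $H$ if every assignment differing from $A$ in at least one and at most $k$ variables has a strictly larger value of $H$ than $A$. *)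

(* Defs.v *)
From HB Require Import structures.
From mathcomp Require Import all_boot all_order all_algebra.
Set Implicit Arguments. Unset Strict Implicit. Unset Printing Implicit Defensive.
Import GRing.Theory Num.Theory.
Local Open Scope ring_scope.

(* A variable index i = (x_1,...,x_f), x_a in {1..l} (encoded as 'I_l). *)
Definition Var (f l : nat) := {ffun 'I_f -> 'I_l}.

(* An assignment S : Var -> {-1,+1}; true encodes +1, false encodes -1. *)
Definition Assign (f l : nat) := {ffun Var f l -> bool}.

Definition spin (b : bool) : int := if b then 1 else -1.

(* A column: a direction b and coordinates y_a for all a <> b. *)
Definition Col (f l : nat) :=
  {b : 'I_f & {ffun {a : 'I_f | a != b} -> 'I_l}}.

Definition inCol (f l : nat) (C : Col f l) (i : Var f l) : bool :=
  [forall a : {a : 'I_f | a != tag C}, i (val a) == tagged C a].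

Definition Ham (f l : nat) (M : Col f l -> int) (S : Assign f l) : int :=
  \sum_(C : Col f l) (\sum_(i : Var f l | inCol C i) spin (S i) - M C) ^+ 2.

Definition hdist (f l : nat) (S T : Assign f l) : nat :=
  #|[set i : Var f l | S i != T i]|.

Definition globalMin (f l : nat) (M : Col f l -> int) (S : Assign f l) : bool :=
  [forall T : Assign f l, Ham M S <= Ham M T].

Definition kMin (f l : nat) (k : nat) (M : Col f l -> int) (S : Assign f l) : bool :=
  [forall T : Assign f l,
     ((1 <= hdist S T)%N && (hdist S T <= k)%N) ==> (Ham M S < Ham M T)].

(* Main.v *)
Require Import Defs.
From HB Require Import structures.
From mathcomp Require Import all_boot all_order all_algebra.
From Stdlib Require Import Reals.
From mathcomp Require Import Rstruct.
From mathcomp Require Import zify.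
From mathcomp Require Import ring lra.
Set Implicit Arguments. Unset Strict Implicit.
Section PartB.
Import GRing.Theory Num.Theory Order.TTheory.
Local Open Scope ring_scope.
Variables f l : nat.

Definition agree (b : 'I_f) (j i : Var f l) := [forall a, (a != b) ==> (j a == i a)].
Lemma cube_bound n : forall (A : {set 'I_f}) (D : {set Var f l}), #|A| = n ->
  D != set0 ->
  (forall i, i \in D -> forall b, b \in A ->
     exists2 j, j \in D & (j != i) && agree b j i) ->
  (expn 2 n <= #|D|)%nat.
Proof.
elim: n => [|n IH] A D hA hD hP.
  by rewrite expn0 card_gt0.
have: (0 < #|A|)%nat by rewrite hA.
rewrite card_gt0 => /set0Pn [b bA].
case/set0Pn: (hD) => i iD.
have [j jD /andP [jni agji]] := hP i iD b bA.
have bij : i b != j b.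
  apply: contra jni => /eqP e; apply/eqP/ffunP => a.
  case: (eqVneq a b) => [->|ab]; first by rewrite e.
  by move/forallP/(_ a): agji; rewrite ab => /eqP.
have hA' : #|A :\ b| = n by move: hA; rewrite (cardsD1 b) bA add1n => -[].
have slice : forall v k, k \in D -> k b = v ->
    (expn 2 n <= #|[set x : Var f l in D | x b == v]|)%nat.
  move=> v k kD kv; apply: (IH (A :\ b)) => //.
    by apply/set0Pn; exists k; rewrite inE kD kv eqxx.
  move=> x; rewrite inE => /andP [xD /eqP xv] b'; rewrite in_setD1 => /andP [b'b b'A].
  have [y yD /andP [ynx agyx]] := hP x xD b' b'A.
  exists y; last by rewrite ynx.
  rewrite inE yD -xv; move/forallP/(_ b): agyx.
  by rewrite eq_sym b'b.
have h1 := slice _ i iD erefl.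
have h2 := slice _ j jD erefl.
rewrite expnS mul2n -addnn.
rewrite -(cardsID [set x : Var f l | x b == i b] D).
apply: leq_add.
  apply: leq_trans h1 _; apply: subset_leq_card; apply/subsetP => x.
  by rewrite !inE andbC.
apply: leq_trans h2 _; apply: subset_leq_card; apply/subsetP => x.
rewrite !inE => /andP [xD /eqP ->]; rewrite xD andbT eq_sym //.
Qed.

Definition colsum (S : Assign f l) (C : Col f l) : int :=
  \sum_(i | inCol C i) spin (S i).

Lemma Ham_ge0 (M : Col f l -> int) (S : Assign f l) : 0 <= Ham M S.
Proof. by apply: sumr_ge0 => C _; apply: sqr_ge0. Qed.

Lemma Ham_eq0 (M : Col f l -> int) (S : Assign f l) : Ham M S = 0 -> forall C, colsum S C = M C.
Proof.
move=> /eqP; rewrite /Ham psumr_eq0; last by move=> C _; apply: sqr_ge0.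
move=> /allP h C; have := h C (mem_index_enum C).
by rewrite sqrf_eq0 subr_eq0 => /eqP.
Qed.

Lemma Ham_0 (M : Col f l -> int) (S : Assign f l) : (forall C, colsum S C = M C) -> Ham M S = 0.
Proof. by move=> h; apply: big1 => C _; have := h C; rewrite /colsum => ->; rewrite subrr expr0n. Qed.

Definition mkcol (b : 'I_f) (i : Var f l) : Col f l :=
  existT _ b [ffun a : {a : 'I_f | a != b} => i (val a)].

Lemma inCol_mk b (i k : Var f l) : inCol (mkcol b i) k = agree b k i.
Proof.
apply/forallP/forallP => /= h a.
  apply/implyP => ab; have := h (exist _ a ab); by rewrite ffunE.
by rewrite ffunE; have := h (val a); rewrite (valP a).
Qed.

Lemma spin_diff (x y : bool) : x != y -> spin x - spin y != 0.
Proof. by case: x; case: y. Qed.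

Lemma cols_dist (S T : Assign f l) : (forall C, colsum S C = colsum T C) -> S != T ->
  (expn 2 f <= hdist S T)%nat.
Proof.
move=> hc hST; rewrite /hdist.
have := @cube_bound f [set: 'I_f] [set i : Var f l | S i != T i].
apply; first by rewrite cardsT card_ord.
  case: (boolP [exists i, S i != T i]) => [/existsP [i hi]|/existsPn h].
    by apply/set0Pn; exists i; rewrite inE.
  by case/negP: hST; apply/eqP/ffunP => i; move: (h i); rewrite negbK => /eqP.
move=> i; rewrite inE => hi b _.
case: (boolP [exists j, [&& S j != T j, j != i & agree b j i]]).
  by case/existsP => j /and3P [hj jni agj]; exists j; rewrite ?inE ?jni.
move=> /existsPn hn; exfalso.
have := hc (mkcol b i); rewrite /colsum => /eqP; rewrite -subr_eq0 -sumrB.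
rewrite (bigD1 i) /=; last first.
  by rewrite inCol_mk; apply/forallP => a; apply/implyP => _.
rewrite big1 ?addr0; first by apply/negP; apply: spin_diff.
move=> k /andP [kC kni]; rewrite inCol_mk in kC.
have := hn k; rewrite kni kC !andbT negbK => /eqP ->.
by rewrite subrr.
Qed.
Lemma card_col (C : Col f l) : (#|[pred i | inCol C i]| <= l)%nat.
Proof.
rewrite -[X in (_ <= X)%nat](card_ord l).
apply: (@leq_card_in _ _ (fun i : Var f l => i (tag C))).
move=> i j; rewrite !inE => hi hj e; apply/ffunP => a.
case: (eqVneq a (tag C)) => [->//|ab].
move/forallP/(_ (exist _ a ab)): hi => /eqP ->.
by move/forallP/(_ (exist _ a ab)): hj => /eqP ->.
Qed.

Lemma spin_norm b : `|spin b| = 1.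
Proof. by case: b. Qed.

Lemma colsum_abs S C : (`|colsum S C| <= l)%nat.
Proof.
have h : `|colsum S C| <= (#|[pred i | inCol C i]|)%:R :> int.
  apply: le_trans (ler_norm_sum _ _ _) _.
  under eq_bigr do rewrite spin_norm.
  by rewrite sumr_const.
rewrite -lez_nat abszE; apply: le_trans h _.
by rewrite natz lez_nat card_col.
Qed.

Definition flip (i : Var f l) (S : Assign f l) : Assign f l :=
  [ffun k => if k == i then ~~ S k else S k].

Lemma flipK i : involutive (flip i).
Proof. by move=> S; apply/ffunP => k; rewrite !ffunE; case: eqP => // _; rewrite negbK. Qed.

Lemma ortho (i j : Var f l) : i != j ->
  \sum_(S : Assign f l) spin (S i) * spin (S j) = 0.
Proof.
move=> ij.
set X := \sum_(S : Assign f l) _.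
have : X = - X.
  rewrite {1}/X (reindex_inj (inv_inj (flipK i))) /X -sumrN.
  apply: eq_bigr => S _; rewrite !ffunE eqxx eq_sym (negbTE ij).
  case: (S i) => /=; rewrite ?mulN1r ?mul1r ?opprK //.
lia.
Qed.

Lemma diag (i : Var f l) :
  \sum_(S : Assign f l) spin (S i) * spin (S i) = #|{: Assign f l}|%:R.
Proof.
rewrite -sumr_const; apply: eq_bigr => S _; by case: (S i).
Qed.

Lemma variance C :
  \sum_(S : Assign f l) (colsum S C)^+2 =
     (#|{: Assign f l}| * #|[pred i | inCol C i]|)%:R.
Proof.
under eq_bigr do rewrite expr2 /colsum big_distrlr /=.
rewrite exchange_big /=.
under eq_bigr do rewrite exchange_big /=.
rewrite natrM mulr_natr -sumr_const.
apply: eq_big => // i iC.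
rewrite (bigD1 i) //= [X in _ + X]big1 ?addr0; first exact: diag.
by move=> j /andP [_ ji]; rewrite ortho // eq_sym.
Qed.
End PartB.

Section PartD.
Import GRing.Theory Num.Theory Order.TTheory.
Local Open Scope ring_scope.
Variables f l : nat.
Hypothesis hl : (0 < l)%nat.

Definition sq : R := Num.sqrt (l%:R).
Lemma sq_gt0 : 0 < sq.
Proof. by rewrite sqrtr_gt0 ltr0n. Qed.
Lemma sq2 : sq ^+ 2 = l%:R.
Proof. by rewrite sqr_sqrtr // ler0n. Qed.

Lemma absz_sq (x : int) : ((absz x)%:R : R) ^+ 2 = (x ^+ 2)%:~R.
Proof.
rewrite pmulrn -rmorphXn /=; congr (_ %:~R).
by rewrite abszE real_normK // num_real.
Qed.

Lemma col_abs_sum (C : Col f l) :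
  \sum_(S : Assign f l) ((absz (colsum S C))%:R : R) <= #|{: Assign f l}|%:R * sq.
Proof.
set n : R := #|{: Assign f l}|%:R.
set X := \sum_(S : Assign f l) _.
have hv : \sum_(S : Assign f l) ((absz (colsum S C))%:R : R) ^+ 2 <= n * sq ^+ 2.
  under eq_bigr do rewrite absz_sq.
  rewrite -rmorph_sum /= variance natz -pmulrn natrM.
  rewrite sq2 ler_pM2l ?ler_nat ?card_col //.
  by rewrite /n ltr0n; apply/card_gt0P; exists [ffun _ => true].
have h2 : 2 * sq * X <= 2 * n * sq ^+ 2.
  have : \sum_(S : Assign f l) 2 * sq * (absz (colsum S C))%:R <=
         \sum_(S : Assign f l) (((absz (colsum S C))%:R : R) ^+ 2 + sq ^+ 2).
    apply: ler_sum => S _; set a : R := (absz _)%:R.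
    rewrite -subr_ge0.
    have -> : a ^+ 2 + sq ^+ 2 - 2 * sq * a = (a - sq) ^+ 2 by ring.
    exact: sqr_ge0.
  rewrite -mulr_sumr big_split /= sumr_const /= -/X.
  move=> h; apply: le_trans h _.
  rewrite (_ : sq ^+ 2 *+ _ = n * sq ^+ 2); first lra.
  by rewrite /n mulr_natl.
have := sq_gt0; nra.
Qed.
End PartD.

Section PartE.
Import GRing.Theory Num.Theory Order.TTheory.
Local Open Scope ring_scope.

Lemma exp_gt0 (x : R) : 0 < exp x.
Proof. by apply/RltP; apply: exp_pos. Qed.

Lemma exp_le (x y : R) : x <= y -> exp x <= exp y.
Proof.
rewrite le_eqVlt => /orP [/eqP -> //| /RltP h].
by apply/ltW/RltP; apply: exp_increasing.
Qed.

Lemma exp_tangent (x : R) : 1 + x <= exp x.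
Proof. by apply/RleP; apply: exp_ineq1_le. Qed.

Lemma jensen (I : finType) (y : I -> R) : (0 < #|I|)%nat ->
  #|I|%:R * exp ((\sum_i y i) / #|I|%:R) <= \sum_i exp (y i).
Proof.
move=> hI; set n : R := #|I|%:R; set mu := (\sum_i y i) / n.
have n0 : n != 0 by rewrite /n pnatr_eq0 -lt0n.
have hi : forall i, exp mu * (1 + (y i - mu)) <= exp (y i).
  move=> i; have := exp_tangent (y i - mu).
  rewrite -(ler_pM2l (exp_gt0 mu)) => /le_trans; apply.
  by rewrite expRD RplusE addrC subrK.
apply: le_trans (ler_sum _ (fun i _ => hi i)).
rewrite -mulr_sumr big_split /= sumrB !sumr_const.
have -> : mu *+ #|I| = \sum_i y i by rewrite -mulr_natr /mu divfK.
by rewrite subrr addr0 mulrC.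
Qed.
End PartE.

Section PartF.
Import GRing.Theory Num.Theory Order.TTheory.
Local Open Scope ring_scope.
Variables f l : nat.
Hypothesis hl : (0 < l)%nat.

Definition code (S : Assign f l) : {ffun Col f l -> bool * 'I_l.+1} :=
  [ffun C => (0 <= colsum S C, inord (absz (colsum S C)))].
Definition dec (d : {ffun Col f l -> bool * 'I_l.+1}) (C : Col f l) : int :=
  if (d C).1 then ((d C).2 : nat)%:Z else - ((d C).2 : nat)%:Z.

Lemma code2 S C : ((code S C).2 : nat) = absz (colsum S C).
Proof. by rewrite ffunE /= inordK // ltnS colsum_abs. Qed.

Lemma dec_code S C : dec (code S) C = colsum S C.
Proof.
rewrite /dec code2 ffunE /=; case: (lerP 0 (colsum S C)) => h.
  by rewrite abszE ger0_norm.
by rewrite abszE ltr0_norm ?opprK.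
Qed.

Definition q : R := exp (- (sq l)^-1).
Definition wgt (d : {ffun Col f l -> bool * 'I_l.+1}) : R :=
  \prod_C q ^+ ((d C).2 : nat).

Lemma wgt_code S :
  wgt (code S) = exp (- (\sum_C ((absz (colsum S C))%:R : R)) / sq l).
Proof.
rewrite /wgt; under eq_bigr do rewrite code2.
rewrite prodrXr /q expRX; congr exp.
rewrite ?RoppE ?RinvE -natr_sum -[in LHS]mulr_natr ?RdivE ?RmultE ?RoppE ?RinvE; ring.
Qed.

Lemma lower :
  #|{: Assign f l}|%:R * exp (- #|{: Col f l}|%:R) <= \sum_S wgt (code S).
Proof.
have hn : (0 < #|{: Assign f l}|)%nat by apply/card_gt0P; exists [ffun _ => true].
under eq_bigr do rewrite wgt_code.
apply: le_trans (jensen _ hn).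
rewrite ler_pM2l ?ltr0n //; apply: exp_le.
set Z := \sum_(S : Assign f l) \sum_C ((absz (colsum S C))%:R : R).
have hZ : Z <= #|{: Col f l}|%:R * (#|{: Assign f l}|%:R * sq l).
  rewrite /Z exchange_big /=.
  apply: le_trans (ler_sum _ (fun C _ => col_abs_sum hl C)) _.
  rewrite sumr_const mulr_natl [X in _ <= X]mulr_natl; exact: lexx.
have -> : \sum_(S : Assign f l) - (\sum_C ((absz (colsum S C))%:R : R)) / sq l
    = - Z / sq l by rewrite /Z -mulr_suml sumrN.
have sq0 := sq_gt0 hl.
have n0 : (0 : R) < #|{: Assign f l}|%:R by rewrite ltr0n.
rewrite lerNl -!mulNr opprK -mulrA -invfM ler_pdivrMr ?mulr_gt0 //.
by rewrite [sq l * _]mulrC.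
Qed.

Lemma geo_bound : \sum_(t < l.+1) q ^+ t <= sq l + 1.
Proof.
have sq0 := sq_gt0 hl.
have q0 : 0 < q by apply: exp_gt0.
have hq : q * (1 + (sq l)^-1) <= 1.
  have := exp_tangent ((sq l)^-1).
  rewrite -(ler_pM2l q0) => /le_trans; apply.
  by rewrite /q expRD RplusE addNr expR0.
have q1 : q < 1.
  apply: lt_le_trans hq; rewrite -[X in X < _]mulr1 ltr_pM2l // ltrDl invr_gt0 //.
set G := \sum_(t < l.+1) q ^+ t.
have G0 : 0 <= G by apply: sumr_ge0 => t _; apply: exprn_ge0; apply: ltW.
have hG : (1 - q) * G <= 1.
  have := subrX1 q l.+1; rewrite -/G => e.
  have -> : (1 - q) * G = 1 - q ^+ l.+1 by rewrite -opprB mulNr -e opprB.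
  by rewrite lerBlDr lerDl exprn_ge0 // ltW.
have h1 : 1 <= (1 - q) * (sq l + 1).
  have e : q * (1 + (sq l)^-1) = q * (sq l + 1) / sq l by field; rewrite gt_eqF.
  move: hq; rewrite e ler_pdivrMr // mul1r => hq.
  lra.
have hpos : 0 < 1 - q by rewrite subr_gt0.
rewrite -(ler_pM2l hpos); apply: le_trans hG h1.
Qed.
End PartF.

Section PartG.
Import GRing.Theory Num.Theory Order.TTheory.
Local Open Scope ring_scope.
Variables f l : nat.

Definition fib (d : {ffun Col f l -> bool * 'I_l.+1}) := [set S : Assign f l | code S == d].

Lemma q_ge0 : 0 <= q l. Proof. exact/ltW/exp_gt0. Qed.

Lemma wgt_ge0 (d : {ffun Col f l -> bool * 'I_l.+1}) : 0 <= wgt d.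
Proof. by apply: prodr_ge0 => C _; apply: exprn_ge0; apply: q_ge0. Qed.

Lemma upper (dm : {ffun Col f l -> bool * 'I_l.+1}) : (forall d, (#|fib d| <= #|fib dm|)%nat) ->
  \sum_(S : Assign f l) wgt (code S) <= #|fib dm|%:R * \sum_(d : {ffun Col f l -> bool * 'I_l.+1}) wgt d.
Proof.
move=> hm; rewrite (partition_big (@code f l) predT) //= mulr_sumr.
apply: ler_sum => d _.
rewrite (eq_bigr (fun _ => wgt d)); last by move=> S /eqP ->.
have -> : \sum_(S : Assign f l | code S == d) wgt d = wgt d *+ #|fib d|.
  by rewrite -sumr_const; apply: eq_bigl => S; rewrite inE.
by rewrite -[wgt d *+ _]mulr_natl ler_wpM2r ?wgt_ge0 ?ler_nat.
Qed.

Lemma sum_wgt : \sum_(d : {ffun Col f l -> bool * 'I_l.+1}) wgt d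
   = (2 * \sum_(t < l.+1) q l ^+ t) ^+ #|{: Col f l}|.
Proof.
rewrite /wgt -(bigA_distr_bigA (fun (C : Col f l) (p : bool * 'I_l.+1) => q l ^+ (p.2 : nat))) /=.
rewrite prodr_const; congr (_ ^+ _).
rewrite -(pair_bigA _ (fun (b : bool) (t : 'I_l.+1) => q l ^+ (t : nat))) /= big_bool /=.
by rewrite -mulr2n mulr_natl.
Qed.
End PartG.

Lemma natpowE m n : Nat.pow m n = expn m n.
Proof. by elim: n => [|n IH] //=; rewrite expnS IH. Qed.

Section PartH.
Import GRing.Theory Num.Theory Order.TTheory.
Local Open Scope ring_scope.
Variables f l : nat.
Hypothesis hf : (0 < f)%nat.
Hypothesis hl : (0 < l)%nat.

Definition c0 : R := @GRing.mul _ (exp (- 1)) (4%:R)^-1.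

Lemma card_assign : #|{: Assign f l}| = expn 2 (expn l f).
Proof. by rewrite card_ffun card_bool card_ffun !card_ord. Qed.

Lemma card_colle : (#|{: Col f l}| <= f * expn l (f - 1))%nat.
Proof.
rewrite card_tagged.
rewrite (eq_map (g := fun _ => expn l (f - 1))); last first.
  move=> b /=; rewrite card_ffun card_ord card_sig.
  by rewrite (cardC1 b) card_ord subn1.
have mc : forall (s : seq 'I_f) (c : nat), map (fun _ => c) s = nseq (size s) c.
  move=> s c; elim: s => [|x s IH] //=; by rewrite IH.
by rewrite mc sumn_nseq size_enum_ord mulnC.
Qed.

Lemma count_bound (dm : {ffun Col f l -> bool * 'I_l.+1}) :
  (forall d : {ffun Col f l -> bool * 'I_l.+1}, (#|fib d| <= #|fib dm|)%nat) ->
  #|{: Assign f l}|%:R * (c0 / (f%:R * sq l)) ^+ (f * expn l (f - 1))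
     <= #|fib dm|%:R.
Proof.
move=> hm.
set N2 : R := #|{: Assign f l}|%:R.
set k := #|{: Col f l}|.
set G := \sum_(t < l.+1) q l ^+ t.
set F : R := #|fib dm|%:R.
set r := c0 / (f%:R * sq l).
have sq0 := sq_gt0 hl.
have sq1 : 1 <= sq l.
  have := sq2 l; have : 1 <= l%:R :> R by rewrite ler1n.
  rewrite expr2 => h1 h2; case: (lerP 1 (sq l)) => // h.
  have : sq l * sq l <= sq l * 1 by rewrite ler_wpM2l ?ltW.
  move=> ?; exfalso; lra.
have hG : G <= sq l + 1 := geo_bound hl.
have G0 : 0 < G.
  rewrite /G big_ord_recl expr0.
  have : 0 <= \sum_(i < l) q l ^+ (bump 0 i) by apply: sumr_ge0 => i _; apply: exprn_ge0; apply: q_ge0.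
  lra.
have e0 : 0 < exp (- 1) := exp_gt0 _.
have e1 : exp (- 1) <= 1.
  by rewrite -expR0; apply: exp_le; rewrite oppr_le0.
have f1 : 1 <= f%:R :> R by rewrite ler1n.
have fs1 : 1 <= f%:R * sq l.
  have : sq l <= f%:R * sq l by rewrite ler_peMl // ltW.
  lra.
have fs0 : 0 < f%:R * sq l by lra.
have G2 : G <= 2 * (f%:R * sq l).
  have : sq l <= f%:R * sq l by rewrite ler_peMl // ltW.
  lra.
have c00 : 0 <= c0 by rewrite /c0 mulr_ge0 // ?invr_ge0 ?ler0n // ltW.
have c01 : c0 <= 1.
  rewrite /c0; have : (4%:R)^-1 <= 1 :> R by rewrite invf_le1 ?ler1n ?ltr0n.
  have : 0 <= (4%:R)^-1 :> R by rewrite invr_ge0 ler0n.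
  move=> h1 h2; have := ler_wpM2l (ltW e0) h2; rewrite mulr1 => h3.
  lra.
have r0 : 0 <= r by rewrite /r divr_ge0 // ltW.
have hr : r * (2 * G) <= exp (- 1).
  rewrite /r /c0 mulrAC ler_pdivrMr //.
  set E := exp (- 1); set P := f%:R * sq l.
  have : E * G <= E * (2 * P) by rewrite ler_wpM2l // ltW.
  have -> : E * (4%:R)^-1 * (2 * G) = (E * G) / 2 by field.
  have -> : E * (2 * P) = 2 * (E * P) by ring.
  lra.
have r1 : r <= 1.
  rewrite /r ler_pdivrMr // mul1r.
  lra.
have hK : r ^+ (f * expn l (f - 1)) <= r ^+ k by apply: ler_wiXn2l => //; apply: card_colle.
have main : N2 * exp (- k%:R) <= F * (2 * G) ^+ k.
  apply: le_trans (lower f hl) _.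
  by rewrite -sum_wgt; apply: upper.
have : N2 * r ^+ k * (2 * G) ^+ k <= F * (2 * G) ^+ k.
  apply: le_trans main; rewrite -mulrA -exprMn ler_wpM2l ?ler0n //.
  have -> : exp (- k%:R) = exp (- 1) ^+ k by rewrite expRX mulNrn.
  apply: lerXn2r; rewrite ?nnegrE ?(ltW e0) //.
  by apply: mulr_ge0 => //; rewrite mulr_ge0 ?ler0n // ltW.
have X0 : 0 < (2 * G) ^+ k by apply: exprn_gt0; rewrite mulr_gt0 ?ltr0n.
rewrite (ler_pM2r X0).
move=> h; apply: le_trans _ h.
have N0 : 0 <= N2 by rewrite /N2 ler0n.
exact: (ler_wpM2l N0 hK).
Qed.
End PartH.

Section PartI.
Import GRing.Theory Num.Theory Order.TTheory.
Local Open Scope ring_scope.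
Variables f l : nat.

Lemma fib_col (dm : {ffun Col f l -> bool * 'I_l.+1}) S :
  S \in fib dm -> forall C, colsum S C = dec dm C.
Proof. by rewrite inE => /eqP <- C; rewrite dec_code. Qed.

Lemma fib_glob (dm : {ffun Col f l -> bool * 'I_l.+1}) S :
  S \in fib dm -> globalMin (dec dm) S.
Proof.
move=> hS; apply/forallP => T; rewrite Ham_0 ?Ham_ge0 //.
exact: fib_col.
Qed.

Lemma glob_ham (dm : {ffun Col f l -> bool * 'I_l.+1}) S S1 :
  S1 \in fib dm -> globalMin (dec dm) S -> Ham (dec dm) S = 0.
Proof.
move=> h1 /forallP /(_ S1); rewrite (Ham_0 (S := S1)); last exact: fib_col.
by move=> h; apply/le_anti; rewrite h Ham_ge0.
Qed.

Lemma glob_kmin (dm : {ffun Col f l -> bool * 'I_l.+1}) S S1 :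
  S1 \in fib dm -> globalMin (dec dm) S -> kMin (expn 2 f - 1) (dec dm) S.
Proof.
move=> h1 hS; have HS := glob_ham h1 hS.
apply/forallP => T; apply/implyP => /andP [d1 d2].
rewrite HS; case: (ltrP 0 (Ham (dec dm) T)) => // hT.
have HT : Ham (dec dm) T = 0 by apply/le_anti; rewrite hT Ham_ge0.
have hST : S != T.
  apply/eqP => e; move: d1; rewrite e /hdist.
  suff -> : [set i | T i != T i] = set0 by rewrite cards0.
  by apply/setP => i; rewrite !inE eqxx.
have := cols_dist (S := S) (T := T).
have hc : forall C, colsum S C = colsum T C.
  by move=> C; rewrite (Ham_eq0 HS) (Ham_eq0 HT).
move=> /(_ hc hST) h.
have := expn_gt0 2 f; lia.
Qed.
Lemma two_natr : (2 : R) = 2%:R.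
Proof. by []. Qed.
End PartI.

Import GRing.Theory Num.Theory Order.TTheory.

Theorem mainTheorem5 :
  exists c : R, (0 < c)%R /\
  forall f l : nat, (0 < f)%N -> (0 < l)%N ->
  exists M : Col f l -> int,
    (pow 2 (l ^ f) * pow (c / (INR f * sqrt (INR l))) (f * l ^ (f - 1))
       <= INR #|[set S : Assign f l | globalMin M S]|)%R /\
    (forall S : Assign f l, globalMin M S -> kMin (2 ^ f - 1) M S).
Proof.
exists c0; split.
  apply/RltP; rewrite /c0; apply: mulr_gt0; first exact: exp_gt0.
  by rewrite invr_gt0 ltr0n.
move=> f l hf hl.
pose S0 : Assign f l := [ffun _ => true].
pose dm := [arg max_(d > code S0) #|fib d|].
have hm : forall d : {ffun Col f l -> bool * 'I_l.+1}, (#|fib d| <= #|fib dm|)%nat.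
  by rewrite /dm; case: arg_maxnP => // d0 _ h d; apply: h.
have [S1 hS1] : exists S1, S1 \in fib dm.
  apply/set0Pn; rewrite -card_gt0; apply: leq_trans (hm (code S0)).
  by rewrite card_gt0; apply/set0Pn; exists S0; rewrite inE.
exists (dec dm); split; last first.
  by move=> S hS; rewrite natpowE; apply: glob_kmin hS1 hS.
apply/RleP.
rewrite !natpowE !RpowE !RmultE RdivE !INRE RsqrtE.
rewrite two_natr.
rewrite -natrX -card_assign.
apply: le_trans (count_bound hf hl hm) _.
rewrite ler_nat; apply: subset_leq_card; apply/subsetP => S hS.
by rewrite inE; apply: fib_glob.
Qed.
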